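(* Let $u$ be a partition with $\omega(u)=n$, and suppose $\dot n=n-u_1-3u_3>0$. Then $v_2(\tau_u)\ge u_3+\lceil\frac{1}{2}\dot n\rceil-1$, except when $\dot n=7u_7$, in which case $v_2(\tau_u)\ge u_3+\lceil\frac12\dot n\rceil-3$.
   Context: A partition is a sequence $u=(u_1,u_2,\dots)$ of nonnegative integers, almost all zero ($u_i$ = number of parts equal to $i$); weight $\omega(u)=\sum_i iu_i$, degree $d(u)=\sum_i u_i$. For a partition $u$ of weight $n\ge1$ with degree $d$, $\gamma_u=\prod_{i\ge1}(i+1)^{u_i}u_i!$ and $\tau_u=(-1)^{d-1}\frac{(n+d-2)!}{\gamma_u}$. $v_2$ is the $2$-adic valuation and $\lceil x\rceil$ is the least integer $\ge x$. *)

(* Defs.v *)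
From mathcomp Require Import all_boot all_order all_algebra.
Set Implicit Arguments. Unset Strict Implicit. Unset Printing Implicit Defensive.
Import Order.TTheory GRing.Theory Num.Theory.

(* A partition u = (u_1, u_2, ...) is represented by a finite list
   s : seq nat with u_i = nth 0 s (i-1) (entries beyond the list are 0). *)
Definition part (s : seq nat) (i : nat) : nat := nth 0 s i.-1.

Definition weight (s : seq nat) : nat := \sum_(k < size s) k.+1 * nth 0 s k.

Definition degree (s : seq nat) : nat := \sum_(k < size s) nth 0 s k.

Definition gamma (s : seq nat) : nat :=
  \prod_(k < size s) (k.+2 ^ nth 0 s k * (nth 0 s k)`!).

Definition tau (s : seq nat) : rat :=
  ((-1) ^+ (degree s).-1 * ((weight s + degree s - 2)`!)%:R / (gamma s)%:R)%R.

Definition v2 (q : rat) : int :=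
  ((logn 2 `|numq q|)%:Z - (logn 2 `|denq q|)%:Z)%R.

(* Main.v *)
Require Import Defs.
From mathcomp Require Import all_boot all_order all_algebra.
From mathcomp Require Import zify.
Import Order.TTheory GRing.Theory Num.Theory.
Set Implicit Arguments. Unset Strict Implicit. Unset Printing Implicit Defensive.

Definition L m := logn 2 m`!.

Lemma L_S m : L m.+1 = logn 2 m.+1 + L m.
Proof. by rewrite /L factS lognM ?fact_gt0. Qed.

Lemma logn2_double m : 0 < m -> logn 2 (m.*2) = (logn 2 m).+1.
Proof. move=> m0; rewrite -mul2n lognM // (@logn_prime 2 2) //. Qed.

Lemma logn2_odd m : odd m -> logn 2 m = 0.
Proof. move=> om; apply: logn_coprime; by rewrite coprime2n om. Qed.

Lemma L_double m : L (m.*2) = m + L m.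
Proof.
elim: m => [|m IH]; first by [].
rewrite doubleS L_S L_S (logn2_odd (m := m.*2.+1)); last by rewrite /= odd_double.
rewrite -doubleS logn2_double // IH L_S; lia.
Qed.

Lemma L_doubleS m : L (m.*2.+1) = L (m.*2).
Proof. by rewrite L_S logn2_odd //= odd_double. Qed.

Lemma L_add a b : L a + L b <= L (a + b).
Proof.
have := bin_fact (leq_addr b a). rewrite addKn => E.
rewrite /L -E lognM ?muln_gt0 ?fact_gt0 ?bin_gt0 ?leq_addr // lognM ?fact_gt0 //.
lia.
Qed.

Lemma half_ind (P : nat -> Prop) : P 0 ->
  (forall m, 0 < m -> (forall k, k < m -> P k) -> P m) -> forall m, P m.
Proof.
move=> P0 H m; elim: m {-2}m (leqnn m) => [|n IH] m lem.
  by move: lem; rewrite leqn0 => /eqP->.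
case: m lem => [|m] lem //; apply: H => // k lk; apply: IH; lia.
Qed.

Lemma L_le m : L m <= m.
Proof.
elim/half_ind: m => // m m0 IH.
move: (odd_double_half m) => E; case: (odd m) E => /= E; rewrite -E.
  rewrite add1n L_doubleS L_double. have := IH (m./2); lia.
rewrite add0n L_double. have := IH (m./2); lia.
Qed.

Definition s m := m - L m.

Lemma sE m : L m + s m = m.
Proof. rewrite /s; have := L_le m; lia. Qed.

Lemma s0 : s 0 = 0. Proof. by []. Qed.

Lemma s_double m : s (m.*2) = s m.
Proof. rewrite /s L_double; have := L_le m; lia. Qed.

Lemma s_doubleS m : s (m.*2.+1) = (s m).+1.
Proof. rewrite /s L_doubleS L_double; have := L_le m; lia. Qed.

Lemma s_add a b : s (a + b) <= s a + s b.
Proof. rewrite /s; have := L_add a b; have := L_le a; have := L_le b; have := L_le (a+b); lia. Qed.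

Lemma s_gt0 m : 0 < m -> 0 < s m.
Proof.
elim/half_ind: m => // m m0 IH _.
move: (odd_double_half m) => E; case: (odd m) E => /= E; rewrite -E.
  by rewrite add1n s_doubleS.
rewrite add0n s_double; apply: IH; lia.
Qed.

Lemma s_le m : s m <= m.
Proof. rewrite /s; lia. Qed.

Lemma logn_le_L m : logn 2 m <= L m.
Proof. case: m => // m; rewrite L_S; lia. Qed.

Lemma s_pred m : 0 < m -> s m + logn 2 m = (s m.-1).+1.
Proof.
case: m => // m _ /=. rewrite /s L_S; have := L_le m; have := L_le m.+1.
rewrite L_S; lia.
Qed.

Lemma s_mul a b : s (a * b) <= s a * s b.
Proof.
elim/half_ind: b => [|b b0 IH]; first by rewrite muln0.
move: (odd_double_half b) => E; case: (odd b) E => /= E; rewrite -E.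
  rewrite add1n s_doubleS mulnS -doubleMr addnC.
  apply: leq_trans (s_add _ _) _; rewrite s_double.
  have := IH b./2; lia.
rewrite add0n s_double -doubleMr s_double; apply: IH; lia.
Qed.

Lemma s_half m : (s m).*2 <= m.+1.
Proof.
elim/half_ind: m => // m m0 IH.
move: (odd_double_half m) => E; case: (odd m) E => /= E; rewrite -E.
  rewrite add1n s_doubleS. have := s_le m./2; lia.
rewrite add0n s_double; have := IH (m./2); lia.
Qed.

Lemma two_logn_le u : 0 < u -> (logn 2 u).*2 <= u.
Proof.
move=> u0; have H1: 2 ^ logn 2 u <= u by apply: dvdn_leq => //; apply: pfactor_dvdnn.
apply: leq_trans H1. elim: (logn 2 u) => // v IH.
rewrite expnS doubleS; case: v IH => // v IH. rewrite expnS in IH *. lia.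
Qed.

Lemma s2 : s 2 = 1. Proof. by []. Qed.
Lemma s4 : s 4 = 1. Proof. by []. Qed.
Lemma l2 : logn 2 2 = 1. Proof. by []. Qed.
Lemma l4 : logn 2 4 = 2. Proof. by []. Qed.

Lemma odd_1d k : odd (1 + k.*2).
Proof. by rewrite oddD odd_double. Qed.
Lemma odd_0d k : odd (0 + k.*2) = false.
Proof. by rewrite add0n odd_double. Qed.

Lemma s_lt m : 3 <= m -> s m <= m - 1.
Proof. move=> h; have := s_half m; lia. Qed.

Lemma T1 z : 3 <= z -> logn 2 z + s z <= z - 1.
Proof.
elim/half_ind: z => // z z0 IH h.
move: (odd_double_half z) => E; case: (odd z) E => /= E; rewrite -E.
  rewrite (logn2_odd (odd_1d _)) add0n E. exact: s_lt.
rewrite add0n logn2_double ?s_double; last by lia.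
have [->|w3] : z./2 = 2 \/ 3 <= z./2 by lia.
  by rewrite l2 s2.
have := IH z./2 ltac:(lia) w3; lia.
Qed.

Lemma A0 x : 3 <= x -> x != 4 -> (logn 2 x + s x).*2 + ~~ odd x <= x.+1.
Proof.
move=> h3 h4; move: (odd_double_half x) => E; case: (odd x) E => /= E; rewrite -E.
  rewrite (logn2_odd (odd_1d _)) add0n E. have := s_half x; lia.
rewrite add0n logn2_double ?s_double ?odd_double; last by lia.
have := T1 (z := x./2) ltac:(lia); lia.
Qed.

Lemma A2 x : 5 <= x -> x != 6 -> x != 8 -> (logn 2 x + s x).*2 <= x - 1.
Proof.
move=> h5 h6 h8; move: (odd_double_half x) => E; case: (odd x) E => /= E; rewrite -E.
  rewrite (logn2_odd (odd_1d _)) add0n add1n s_doubleS.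
  have [->|k3] : x./2 = 2 \/ 3 <= x./2 by lia.
    by rewrite s2.
  have := s_lt k3; lia.
rewrite add0n logn2_double ?s_double; last by lia.
set z := x./2 in E *.
move: (odd_double_half z) => F; case: (odd z) F => /= F.
  have oz : odd z by rewrite -F oddD odd_double.
  rewrite (logn2_odd oz).
  have -> : s z = (s z./2).+1 by rewrite -{1}F add1n s_doubleS.
  have := s_half z./2; lia.
have -> : logn 2 z = (logn 2 z./2).+1 by rewrite -{1}F add0n logn2_double //; lia.
have -> : s z = s z./2 by rewrite -{1}F add0n s_double.
have := T1 (z := z./2) ltac:(lia); lia.
Qed.

Lemma Rl y : 3 <= y -> y != 4 -> s y + (logn 2 y).*2 <= y - 1.
Proof.
elim/half_ind: y => // y y0 IH h3 h4.
move: (odd_double_half y) => E; case: (odd y) E => /= E; rewrite -E.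
  rewrite (logn2_odd (odd_1d _)) E. have := s_lt h3; lia.
rewrite add0n logn2_double ?s_double; last by lia.
have [->|w3] : y./2 = 4 \/ (3 <= y./2 /\ y./2 != 4) by lia.
  by rewrite l4 s4.
case: w3 => a b; have := IH y./2 ltac:(lia) a b; lia.
Qed.

Lemma Ql j : 2 <= j -> j != 3 -> j != 7 ->
  (logn 2 j.+1).*2 + (s j.-1).*2 + odd j <= j.
Proof.
move=> h2 h3 h7; move: (odd_double_half j) => E; case: (odd j) E => /= E; rewrite -E.
  rewrite add1n -doubleS logn2_double // -pred_Sn s_double.
  have H := s_pred (m := (j./2).+1) isT. rewrite -pred_Sn in H.
  have := Rl (y := (j./2).+1) ltac:(lia) ltac:(lia); lia.
rewrite add0n logn2_odd /= ?odd_double //.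
have := s_half (j./2.*2).-1; lia.
Qed.

Definition g i u := if i == 1 then 0 else if i == 3 then 2 * u else (uphalf (i * u)).*2.

Lemma uphalf2 n : (uphalf n).*2 = odd n + n.
Proof. exact: uphalfK. Qed.

Lemma s_sub2 x u : 2 <= x -> 1 <= u -> s (x * u - 2) <= s x * s u.-1 + s (x - 2).
Proof.
move=> hx hu; have -> : x * u - 2 = x * u.-1 + (x - 2).
  case: u hu => // u _ /=; rewrite mulnS; lia.
apply: leq_trans (s_add _ _) _; rewrite leq_add2r; exact: s_mul.
Qed.

Lemma w_le u : 1 <= u -> logn 2 u + s u <= u.
Proof. move=> hu; have := logn_le_L u; have := sE u; lia. Qed.

Lemma s_ge1 u : 1 <= u -> 1 <= s u. Proof. exact: s_gt0. Qed.

Lemma Dterm i u : 1 <= i -> g i u + (u * logn 2 i.+1 + L u).*2 <= (L (i.+1 * u)).*2.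
Proof.
move=> hi; rewrite /g.
case: eqP => [->|n1].
  rewrite mul2n L_double l2; lia.
case: eqP => [->|n3].
  have -> : 4 * u = (u.*2).*2 by lia.
  rewrite L_double L_double l4; lia.
have hx : 3 <= i.+1 by lia.
have h4 : i.+1 != 4 by apply/eqP; lia.
have HA := A0 hx h4.
have hs := s_mul i.+1 u.
have E1 := sE (i.+1 * u). have E2 := sE u. have su := s_le u.
rewrite uphalf2.
set v := logn 2 i.+1 in HA *. set sg := s i.+1 in HA hs *.
set a := s u in E2 su hs *.
have sg1 : 1 <= sg by apply: s_gt0.
have K1 : sg * a + u <= a + sg * u.
  have : (sg - 1) * a <= (sg - 1) * u by apply: leq_mul.
  case: (sg) sg1 => // k _; rewrite subSS subn0 !mulSn; lia.
have K2 : ((v + sg).*2 + ~~ odd i.+1) * u <= i.+2 * u by apply: leq_mul.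
set b := ~~ odd i.+1 in K2 HA.
have K2' : 2 * (v * u) + 2 * (sg * u) + b * u <= i * u + 2 * u.
  move: K2; rewrite -!mul2n !mulnDl !mulnA; lia.
have K3 : odd (i * u) <= b * u.
  rewrite /b oddM /=; case: (odd i); case Hu: (odd u) => //=; rewrite mul1n; by case: (u) Hu.
have K4 : i.+1 * u = i * u + u by rewrite mulSn addnC.
rewrite K4 in E1 hs.
rewrite (mulnC u v) K4. lia.
Qed.

Lemma Fw u : 1 <= u -> (logn 2 u).*2 + odd u <= u.
Proof.
move=> hu; case Ho: (odd u).
  by rewrite logn2_odd.
rewrite addn0; exact: two_logn_le.
Qed.

Lemma s3 : s 3 = 2. Proof. by []. Qed.
Lemma s6 : s 6 = 2. Proof. by []. Qed.
Lemma s8 : s 8 = 1. Proof. by []. Qed.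
Lemma l3 : logn 2 3 = 0. Proof. by []. Qed.
Lemma l6 : logn 2 6 = 1. Proof. by []. Qed.
Lemma l8 : logn 2 8 = 3. Proof. by []. Qed.

Lemma Jterm j u : 2 <= j -> j != 3 -> j != 7 -> 1 <= u ->
  (uphalf (j * u)).*2 + (u * logn 2 j.+1 + L u).*2 <= (L (j.+1 * u - 2)).*2 + 2.
Proof.
move=> h2 h3 h7 hu.
have Hp := s_pred hu. have Hw := w_le hu. have HF := Fw hu.
have E2 := sE u. have s1 := s_ge1 hu.
rewrite uphalf2.
have [->|j2] : j = 2 \/ 3 <= j by lia.
  rewrite l3.
  have [->|u2] : u = 1 \/ 2 <= u by lia.
    by [].
  have -> : 3 * u - 2 = u.*2 + (u - 2) by lia.
  have := L_add u.*2 (u - 2). rewrite L_double. rewrite oddM /=. lia.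
have [->|j5] : j = 5 \/ (j != 5) by lia.
  have HS := s_sub2 (x := 6) isT hu. rewrite s6 s4 in HS.
  have E1 := sE (6 * u - 2).
  rewrite l6 oddM /=. lia.
have hx5 : 5 <= j.+1 by lia.
have HA := A2 hx5 ltac:(lia) ltac:(lia).
have HQ := Ql h2 h3 h7.
have HS := s_sub2 (x := j.+1) ltac:(lia) hu.
have E1 := sE (j.+1 * u - 2).
rewrite (_ : j.+1 - 2 = j.-1) in HS; last by lia.
set v := logn 2 j.+1 in HA HQ *. set sg := s j.+1 in HA HS *.
move: hu Hp Hw HF E2 s1 HS E1. case: u => // m _ /=.
set a := s m.+1. set w := logn 2 m.+1. set b := s m.
move=> Hp Hw HF E2 s1 HS E1.
have K1 : sg * b <= sg * m by apply: leq_mul => //; lia.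
have K2 : ((v + sg).*2) * m <= j * m by apply: leq_mul => //; lia.
have K3 : odd (j * m.+1) <= odd j by rewrite oddM; case: (odd j); case: (odd m.+1).
rewrite -!mul2n !mulnDl in K2.
set X := j.+1 * m.+1 - 2 in HS E1 *.
have EX : X = j + j * m + m - 1 by rewrite /X mulSn mulnS; lia.
have Ev : m.+1 * v = v + v * m by rewrite mulSn mulnC.
have Ej : j * m.+1 = j + j * m by rewrite mulnS.
rewrite Ev Ej. rewrite Ej in K3. lia.
Qed.

Lemma J7 u : 1 <= u ->
  (uphalf (7 * u)).*2 + (u * logn 2 8 + L u).*2 <= (L (8 * u - 2)).*2 + 6.
Proof.
move=> hu.
have Hp := s_pred hu. have Hw := w_le hu. have HF := Fw hu.
have E2 := sE u. have s1 := s_ge1 hu.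
have HS := s_sub2 (x := 8) isT hu. rewrite s8 s6 mul1n in HS.
have E1 := sE (8 * u - 2).
rewrite uphalf2 l8 oddM /=. lia.
Qed.

Section V2Sec.
Local Open Scope ring_scope.

Lemma v2N (x : rat) : v2 (- x) = v2 x.
Proof. by rewrite /v2 numqN denqN abszN. Qed.

Lemma v2_frac e (a b : nat) : (0 < a)%N -> (0 < b)%N ->
  v2 ((-1) ^+ e * a%:R / b%:R) = (logn 2 a)%:Z - (logn 2 b)%:Z.
Proof.
move=> a0 b0.
have -> : v2 ((-1) ^+ e * a%:R / b%:R) = v2 (a%:R / b%:R).
  elim: e => [|e IH]; first by rewrite mul1r.
  rewrite exprS mulN1r mulNr mulNr v2N. exact: IH.
set x : rat := a%:R / b%:R.
have xb : x * b%:R = a%:R by rewrite /x mulfVK // pnatr_eq0 -lt0n.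
have E : numq x * b = a%:Z * denq x.
  apply: (@intr_inj rat). rewrite !rmorphM /= -!pmulrn numqE mulrAC xb.
  by [].
have E' : (`|numq x| * b = a * `|denq x|)%N.
  by have := congr1 absz E; rewrite !abszM !absz_nat.
have nx : x != 0 by rewrite /x mulf_neq0 ?invr_eq0 ?pnatr_eq0 -?lt0n.
have n0 : (0 < `|numq x|)%N by rewrite absz_gt0 numq_eq0.
have d0 : (0 < `|denq x|)%N by rewrite absz_gt0 gt_eqF ?denq_gt0.
have := congr1 (logn 2) E'. rewrite !lognM // => H.
rewrite /v2 -/x. lia.
Qed.

End V2Sec.

Lemma log_prod n (F : nat -> nat) : (forall k, 0 < F k) ->
  logn 2 (\prod_(k < n) F k) = \sum_(k < n) logn 2 (F k).
Proof.
move=> Fp; elim: n => [|n IH]; first by rewrite !big_ord0.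
rewrite !big_ord_recr /= lognM ?IH //; by apply: prodn_gt0.
Qed.

Lemma L_sum (I : finType) (P : pred I) (F : I -> nat) :
  \sum_(i | P i) L (F i) <= L (\sum_(i | P i) F i).
Proof.
apply: (big_rec2 (fun x y => x <= L y)) => // i a b _ H.
apply: leq_trans (L_add _ _); by rewrite leq_add2l.
Qed.

Lemma uphalf_add a b : uphalf (a + b) <= uphalf a + uphalf b.
Proof.
have := uphalfK a; have := uphalfK b; have := uphalfK (a + b).
rewrite oddD; case: (odd a); case: (odd b) => /=; lia.
Qed.

Lemma uphalf_sum n (F : nat -> nat) :
  uphalf (\sum_(k < n) F k) <= \sum_(k < n) uphalf (F k).
Proof.
apply: (big_rec2 (fun x y => uphalf x <= y)) => // i a b _ H.
apply: leq_trans (uphalf_add _ _) _; by rewrite leq_add2l.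
Qed.

Lemma sum_pick (u : seq nat) (c : nat) :
  \sum_(k < size u) ((k : nat) == c) * nth 0 u k = nth 0 u c.
Proof.
case: (ltnP c (size u)) => hc.
  rewrite (bigD1 (Ordinal hc)) //= eqxx mul1n big1 ?addn0 // => k /eqP nk.
  case: eqP => [e|]; last by rewrite mul0n.
  by exfalso; apply: nk; apply: val_inj.
rewrite nth_default // big1 // => k _; case: eqP => [e|]; last by rewrite mul0n.
by move: (ltn_ord k); rewrite e ltnNge hc.
Qed.

Lemma sum_pos n (F : nat -> nat) : 0 < \sum_(k < n) F k -> exists k : 'I_n, 0 < F k.
Proof.
case: (pickP (fun k : 'I_n => 0 < F k)) => [k Hk|H]; first by exists k.
by rewrite big1 // => k _; move: (H k); case: (F k).
Qed.

Definition G (u : seq nat) := \sum_(k < size u) g k.+1 (nth 0 u k).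
Definition lg (u : seq nat) (k : nat) := nth 0 u k * logn 2 k.+2 + L (nth 0 u k).
Definition Lg (u : seq nat) := \sum_(k < size u) lg u k.

Lemma WD u : weight u + degree u = \sum_(k < size u) k.+2 * nth 0 u k.
Proof.
rewrite /weight /degree -big_split; apply: eq_bigr => k _ /=.
rewrite mulSn [_ + nth _ _ _]addnC //.
Qed.

Lemma gammaE u : logn 2 (gamma u) = Lg u.
Proof.
rewrite /gamma (@log_prod _ (fun k => k.+2 ^ nth 0 u k * (nth 0 u k)`!)) => [|k]; last by rewrite muln_gt0 expn_gt0 fact_gt0.
apply: eq_bigr => k _; rewrite lognM ?expn_gt0 ?fact_gt0 // lognX.
by [].
Qed.

Lemma v2tau u : v2 (tau u) = ((L (weight u + degree u - 2))%:Z - (Lg u)%:Z)%R.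
Proof.
by rewrite /tau v2_frac ?fact_gt0 ?gammaE //; rewrite /gamma; apply: prodn_gt0 => k;
  rewrite muln_gt0 expn_gt0 fact_gt0.
Qed.

Lemma generic u (k0 : 'I_(size u)) c :
  0 < nth 0 u k0 ->
  g k0.+1 (nth 0 u k0) + (lg u k0).*2 <= (L (k0.+2 * nth 0 u k0 - 2)).*2 + c ->
  G u + (Lg u).*2 <= (L (weight u + degree u - 2)).*2 + c.
Proof.
move=> hx Hj.
have EG : G u = g k0.+1 (nth 0 u k0) + \sum_(i < size u | i != k0) g i.+1 (nth 0 u i)
  by rewrite /G (bigD1 k0).
have EL : Lg u = lg u k0 + \sum_(i < size u | i != k0) lg u i by rewrite /Lg (bigD1 k0).
set R := \sum_(i < size u | i != k0) i.+2 * nth 0 u i.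
have EW : weight u + degree u - 2 = (k0.+2 * nth 0 u k0 - 2) + R.
  rewrite WD (bigD1 k0) //= -/R.
  have : 2 <= k0.+2 * nth 0 u k0 by rewrite -{1}(muln1 2); apply: leq_mul.
  lia.
have HR := L_sum (fun i : 'I_(size u) => i != k0) (fun i : 'I_(size u) => i.+2 * nth 0 u i).
rewrite -/R in HR.
rewrite EG EL EW.
have HL := L_add (k0.+2 * nth 0 u k0 - 2) R.
have HD : \sum_(i < size u | i != k0) (g i.+1 (nth 0 u i) + 2 * lg u i)
        <= \sum_(i < size u | i != k0) 2 * L (i.+2 * nth 0 u i).
  apply: leq_sum => i _; have := Dterm (nth 0 u i) (isT : 1 <= i.+1).
  rewrite /lg -!mul2n. by [].
rewrite big_split /= -big_distrr -big_distrr /= in HD.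
have HR2 : \sum_(i < size u | i != k0) L (i.+2 * nth 0 u i) <= L R := HR.
set A1 := \sum_(i < size u | i != k0) g i.+1 (nth 0 u i) in HD *.
set A2 := \sum_(i < size u | i != k0) lg u i in HD *.
set A3 := \sum_(i < size u | i != k0) L (i.+2 * nth 0 u i) in HD HR2 *.
set Q := L (k0.+2 * nth 0 u k0 - 2) in Hj HL *.
set Q2 := L (_ + R) in HL *.
set LR := L R in HL HR2.
move: Hj HL HR2 HD. clear. lia.
Qed.

Unset Implicit Arguments.

Theorem lemma4p7 (u : seq nat) (n : nat) :
  weight u = n ->
  0 < n - part u 1 - 3 * part u 3 ->
  let ndot := n - part u 1 - 3 * part u 3 in
  (if ndot == 7 * part u 7 then
     ((part u 3)%:Z + (uphalf ndot)%:Z - 3 <= v2 (tau u))%R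
   else
     ((part u 3)%:Z + (uphalf ndot)%:Z - 1 <= v2 (tau u))%R).
Proof.
move=> Hw Hn; cbv zeta.
rewrite /part /= in Hn *.
set h := fun k : nat => if (k == 0) || (k == 2) then 0 else k.+1 * nth 0 u k.
have Eh : n = nth 0 u 0 + 3 * nth 0 u 2 + \sum_(k < size u) h k.
  rewrite -Hw /weight -(sum_pick u 0) -(sum_pick u 2) big_distrr -!big_split /=.
  apply: eq_bigr => -[[|[|[|k]]] hk] _ //=; rewrite /h /=; lia.
have Hnd : n - nth 0 u 0 - 3 * nth 0 u 2 = \sum_(k < size u) h k by lia.
rewrite Hnd in Hn *.
have HB : (nth 0 u 2).*2 + (uphalf (\sum_(k < size u) h k)).*2 <= G u.
  have -> : G u = 2 * \sum_(k < size u) ((k : nat) == 2) * nth 0 u k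
                 + 2 * \sum_(k < size u) uphalf (h k).
    rewrite !big_distrr -big_split /G; apply: eq_bigr => -[[|[|[|k]]] hk] _ //=;
      rewrite /g /h /=; lia.
  rewrite sum_pick; have := uphalf_sum (size u) h; lia.
set h' := fun k : nat => if k == 6 then 0 else h k.
have Eh' : \sum_(k < size u) h k = 7 * nth 0 u 6 + \sum_(k < size u) h' k.
  rewrite -(sum_pick u 6) big_distrr -big_split /=.
  apply: eq_bigr => -[k hk] _ /=; rewrite /h' /h.
  case: (k =P 6) => [->|]; first by rewrite /=; lia.
  by move=> _ /=; rewrite mul0n muln0.
rewrite v2tau.
case: (posnP (\sum_(k < size u) h' k)) => [Z|P].
  have E7 : \sum_(k < size u) h k = 7 * nth 0 u 6 by lia.
  rewrite E7 eqxx.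
  have x6 : 0 < nth 0 u 6 by lia.
  have s6 : 6 < size u by rewrite ltnNge; apply/negP => /(nth_default 0); lia.
  have := generic (k0 := Ordinal s6) (c := 6) x6.
  have := J7 x6.
  rewrite /g /lg /=. move=> J H; have {}H := H J.
  rewrite E7 in HB. lia.
have [k0 Pk] := sum_pos P.
move: Pk; rewrite /h' /h.
case: (k0 =P 6 :> nat) => // n6.
case: ifP => // Hk Pk.
have x0 : 0 < nth 0 u k0 by move: Pk; rewrite muln_gt0 => /andP[].
have := generic (k0 := k0) (c := 2) x0.
have := Jterm (j := k0.+1) ltac:(move: Hk; case: (nat_of_ord k0) => [|[|[|]]] //) ltac:(move: Hk; case: (nat_of_ord k0) => [|[|[|]]] //)
  ltac:(apply/eqP => [[]]; exact: n6) x0.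
have -> : g k0.+1 (nth 0 u k0) = (uphalf (k0.+1 * nth 0 u k0)).*2.
  by rewrite /g; move: Hk; case: (nat_of_ord k0) => [|[|[|]]].
rewrite /lg. move=> J H; have {}H := H J.
case: ifP => _; lia.
Qed.
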